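(* Let $X=\{x_0,\ldots,x_m\}$, $\tilde X=\{\tilde x_1,\ldots,\tilde x_q\}$ (commuting), $c\in\mathbb{R}^q\langle\langle X\rangle\rangle$ proper and $d\in\mathbb{R}^m[[\tilde X]]$ purely improper. Then the series $c\,\tilde\circ\,\delta_{(d^{-1}\circ c)^{\circ-1}}$ is a proper series in $\mathbb{R}^q\langle\langle X\rangle\rangle$ and is the unique fixed point of the map $e\mapsto c\,\tilde\circ\,\delta_{(d\circ e)}$ on the proper series of $\mathbb{R}^q\langle\langle X\rangle\rangle$, where $\circ$ between $d$ (or $d^{-1}$) and a noncommutative series denotes the Wiener-Fliess composition product.
   Context: $\mathbb{R}^\ell\langle\langle X\rangle\rangle$: formal power series in noncommuting letters with coefficients in $\mathbb{R}^\ell$; proper means zero constant term; purely improper means each component has nonzero constant term; componentwise products. $\mathbb{R}^m[[\tilde X]]$: formal power series in commuting letters with coefficients in $\mathbb{R}^m$; $d^{-1}$ is the componentwise Cauchy (multiplicative) inverse of purely improper $d$. Shuffle product $\sqcup\!\sqcup$: bilinear, $(x_i\eta)\sqcup\!\sqcup(x_j\xi)=x_i(\eta\sqcup\!\sqcup x_j\xi)+x_j(x_i\eta\sqcup\!\sqcup\xi)$, $\eta\sqcup\!\sqcup\emptyset=\emptyset\sqcup\!\sqcup\eta=\eta$; $g^{\sqcup\!\sqcup-1}$ the componentwise shuffle inverse. Wiener-Fliess composition for proper $e\in\mathbb{R}^q\langle\langle X\rangle\rangle$: $d\circ e=\sum_{\tilde\eta\in\tilde X^\ast}(d,\tilde\eta)e^{\sqcup\!\sqcup\tilde\eta}$,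 $e^{\sqcup\!\sqcup\emptyset}=1$, $e^{\sqcup\!\sqcup\tilde x_i\tilde\eta}=e_i\sqcup\!\sqcup e^{\sqcup\!\sqcup\tilde\eta}$. Multiplicative mixed composition of $c\in\mathbb{R}^q\langle\langle X\rangle\rangle$ and $g\in\mathbb{R}^m\langle\langle X\rangle\rangle$: $c\,\tilde\circ\,\delta_g=\sum_{\eta\in X^\ast}(c,\eta)\bar\phi_g(\eta)(\mathbf 1)$, $\mathbf 1=1\emptyset$, $\bar\phi_g(x_0)(w)=x_0w$, $\bar\phi_g(x_i)(w)=x_i(g_i\sqcup\!\sqcup w)$ ($i\ge1$), extended multiplicatively (concatenation to composition). For purely improper $g\in\mathbb{R}^m\langle\langle X\rangle\rangle$, $g^{\circ-1}$ is the unique $h\in\mathbb{R}^m\langle\langle X\rangle\rangle$ with $h=g^{\sqcup\!\sqcup-1}\,\tilde\circ\,\delta_h$. *)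

(* Defs.v *)
From HB Require Import structures.
From mathcomp Require Import all_boot all_order all_algebra.
From mathcomp Require Import reals.
From Stdlib Require Import ClassicalEpsilon.
Set Implicit Arguments. Unset Strict Implicit. Unset Printing Implicit Defensive.
Import GRing.Theory Num.Theory.
Local Open Scope ring_scope.

(* An R^l-valued series is a function 'I_l -> ser R A (componentwise). *)
Section NCSeries.
Variable R : realType.
Variable A : finType.

Definition ser := seq A -> R.

Definition one : ser := fun w => if w is [::] then 1 else 0.

Definition lcons (a : A) (s : ser) : ser :=
  fun w => if w is b :: w' then (if b == a then s w' else 0) else 0.

(* shuffle of two words, as a list of words with multiplicities:
   u ⧢ [] = [] ⧢ u = u, (a u) ⧢ (b v) = a (u ⧢ b v) + b (a u ⧢ v) *)
Fixpoint shw (u v : seq A) {struct u} : seq (seq A) :=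
  match u with
  | [::] => [:: v]
  | a :: u' =>
    (fix shv (v : seq A) : seq (seq A) :=
       match v with
       | [::] => [:: u]
       | b :: v' => map (cons a) (shw u' v) ++ map (cons b) (shv v')
       end) v
  end.

(* bilinear extension of the shuffle to series; only pairs of words
   whose lengths add up to |w| can produce w *)
Definition shuffle (s t : ser) : ser := fun w =>
  \sum_(k < (size w).+1) \sum_(u : k.-tuple A) \sum_(v : (size w - k).-tuple A)
     (s u * t v) *+ count_mem w (shw u v).

Definition shpow (s : ser) (n : nat) : ser := iter n (shuffle s) one.

Definition shinv (l : nat) (g : 'I_l -> ser) : 'I_l -> ser :=
  fun j => epsilon (inhabits (fun _ : seq A => 0 : R))
                   (fun h => shuffle (g j) h = one).

Definition proper_ser (l : nat) (c : 'I_l -> ser) : Prop :=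
  forall j, c j [::] = 0.

Definition purely_improper (l : nat) (c : 'I_l -> ser) : Prop :=
  forall j, c j [::] != 0.

End NCSeries.

Section CSeries.
Variable R : realType.
Variable q : nat.

Definition mono := {ffun 'I_q -> nat}.
Definition cser := mono -> R.
Definition deg (a : mono) : nat := (\sum_(i < q) a i)%N.
Definition natf (n : nat) (b : {ffun 'I_q -> 'I_n}) : mono :=
  [ffun i => nat_of_ord (b i)].

Definition cone : cser := fun a => if a == [ffun => 0%N] then 1 else 0.

Definition cmul (d h : cser) : cser := fun a =>
  \sum_(b : {ffun 'I_q -> 'I_(deg a).+1} | [forall i, (b i <= a i)%N])
     d (natf b) * h [ffun i => (a i - b i)%N].

Definition cinv (l : nat) (d : 'I_l -> cser) : 'I_l -> cser :=
  fun j => epsilon (inhabits (fun _ : mono => 0 : R))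
                   (fun h => cmul (d j) h = cone).

Definition cpurely_improper (l : nat) (d : 'I_l -> cser) : Prop :=
  forall j, d j [ffun => 0%N] != 0.

End CSeries.

(* Compositions; alphabet X = {x_0,...,x_m} is 'I_m.+1                 *)
Section Compositions.
Variable R : realType.

Definition shmono (A : finType) (q : nat) (e : 'I_q -> ser R A) (a : mono q)
  : ser R A :=
  foldr (fun i acc => shuffle (shpow (e i) (a i)) acc) (@one R A) (enum 'I_q).

(* Wiener-Fliess composition d o e = sum_a (d,a) e^{⧢ a}, for proper e;
   at a word w only monomials of degree <= |w| contribute (e proper),
   and all of them have every exponent <= |w|. *)
Definition wfcomp (A : finType) (m q : nat) (d : 'I_m -> cser R q)
  (e : 'I_q -> ser R A) : 'I_m -> ser R A := fun j w =>
  \sum_(a : {ffun 'I_q -> 'I_(size w).+1}) d j (natf a) * shmono e (natf a) w.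

(* bar phi_g(eta)(1): x_0 w |-> x_0 w, x_i w |-> x_i (g_i ⧢ w), i >= 1;
   letter i >= 1 of 'I_m.+1 corresponds to component i-1 of g : 'I_m -> _ *)
Definition phibar (m : nat) (g : 'I_m -> ser R 'I_m.+1) (eta : seq 'I_m.+1)
  : ser R 'I_m.+1 :=
  foldr (fun a acc => match unlift ord0 a with
                      | None => lcons a acc
                      | Some i => lcons a (shuffle (g i) acc)
                      end) (@one R 'I_m.+1) eta.

(* multiplicative mixed composition c ~o delta_g = sum_eta (c,eta) phibar_g(eta)(1);
   phibar_g(eta)(1) is supported on words of length >= |eta| *)
Definition mixcomp (m q : nat) (c : 'I_q -> ser R 'I_m.+1)
  (g : 'I_m -> ser R 'I_m.+1) : 'I_q -> ser R 'I_m.+1 := fun j w =>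
  \sum_(k < (size w).+1) \sum_(eta : k.-tuple 'I_m.+1) c j eta * phibar g eta w.

Definition compinv (m : nat) (g : 'I_m -> ser R 'I_m.+1) : 'I_m -> ser R 'I_m.+1 :=
  epsilon (inhabits (fun (_ : 'I_m) (_ : seq 'I_m.+1) => 0 : R))
          (fun h => h = mixcomp (shinv g) h).

End Compositions.

(* Main.v *)
From HB Require Import structures.
Require Import Defs.
From mathcomp Require Import all_boot all_order all_algebra.
From mathcomp Require Import reals.
From Stdlib Require Import ClassicalEpsilon FunctionalExtensionality.
From mathcomp Require Import ring lra zify.
Set Implicit Arguments. Unset Strict Implicit. Unset Printing Implicit Defensive.
Import GRing.Theory Num.Theory.
Local Open Scope ring_scope.

Section Sh.
Variable R : realType.
Variable A : finType.
Implicit Types s t : ser R A.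
Notation one1 := (@Defs.one R A).

Fixpoint allw (k : nat) : seq (seq A) :=
  if k is k'.+1 then [seq a :: u | a <- index_enum A, u <- allw k'] else [:: [::]].

Lemma allw_size k u : u \in allw k -> size u = k.
Proof.
elim: k u => [|k IH] u /=; first by rewrite inE => /eqP ->.
case/allpairsPdep => a [v [_ Hv ->]] /=. by rewrite (IH _ Hv).
Qed.

Lemma sum_tuple k (F : seq A -> R) :
  \sum_(u : k.-tuple A) F (val u) = \sum_(u <- allw k) F u.
Proof.
elim: k F => [|k IH] F.
  rewrite /= big_seq1 (eq_bigr (fun _ => F [::])); last by move=> u _; rewrite tuple0.
  by rewrite big_const card_tuple expn0 /= addr0.
rewrite /= big_allpairs_dep /=.
have -> : \sum_(u : k.+1.-tuple A) F (val u) =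
   \sum_(p : A * k.-tuple A) F (p.1 :: val p.2).
  rewrite (reindex (fun p : A * k.-tuple A => [tuple of p.1 :: val p.2])) //=.
  exists (fun u : k.+1.-tuple A => (thead u, [tuple of behead u])).
    by move=> [a t] _ /=; congr pair; apply: val_inj.
  move=> u _; apply: val_inj => /=. by case: u => [[|x s] //=].
rewrite -(pair_big xpredT xpredT (fun a (t : k.-tuple A) => F (a :: val t))) /=.
by apply: eq_bigr => a _; rewrite (IH (fun u => F (a :: u))).
Qed.

Definition D (a : A) s : ser R A := fun w => s (a :: w).

Lemma shuffleE s t w : shuffle s t w =
  \sum_(k < (size w).+1) \sum_(u <- allw k) \sum_(v <- allw (size w - k))
     (s u * t v) *+ count_mem w (shw u v).
Proof.
rewrite /shuffle; apply: eq_bigr => k _.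
rewrite -sum_tuple; apply: eq_bigr => u _.
by rewrite -(sum_tuple _ (fun v => (s u * t v) *+ count_mem w (shw u v))).
Qed.

Lemma shw_nilr (u : seq A) : shw u [::] = [:: u].
Proof. by case: u. Qed.

Lemma count_shw (a : A) (w u v : seq A) : count_mem (a :: w) (shw u v) =
  ((if u is b :: u' then (b == a) * count_mem w (shw u' v) else 0) +
   (if v is b :: v' then (b == a) * count_mem w (shw u v') else 0))%N.
Proof.
case: u => [|b u]; case: v => [|c v] /=.
- by [].
- by rewrite eqseq_cons; case: (c == a); case: (v == w).
- by rewrite shw_nilr /= eqseq_cons; case: (b == a); case: (u == w).
- rewrite count_cat !count_map.
  congr addn.
  + case: eqP => [->|ne] /=; first by rewrite mul1n; apply: eq_count => x /=; rewrite eqseq_cons eqxx.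
    rewrite mul0n; apply/eqP; rewrite -leqn0 leqNgt -has_count; apply/hasPn => x _ /=.
    by rewrite eqseq_cons; apply/nandP; left; apply/eqP => E; apply: ne.
  + case: eqP => [->|ne] /=; first by rewrite mul1n; apply: eq_count => x /=; rewrite eqseq_cons eqxx.
    rewrite mul0n; apply/eqP; rewrite -leqn0 leqNgt -has_count; apply/hasPn => x _ /=.
    by rewrite eqseq_cons; apply/nandP; left; apply/eqP => E; apply: ne.
Qed.

Lemma shuffle_nil s t : shuffle s t [::] = s [::] * t [::].
Proof. by rewrite shuffleE /= big_ord1 /= !big_seq1. Qed.

Lemma sum_pick (F : A -> R) a : \sum_(b <- index_enum A) F b *+ (b == a) = F a.
Proof.
rewrite (bigD1_seq a) ?mem_index_enum ?index_enum_uniq //= eqxx mulr1n big1 ?addr0 //.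
by move=> b /negbTE ->.
Qed.

Lemma shuffle_cons s t a w :
  shuffle s t (a :: w) = shuffle (D a s) t w + shuffle s (D a t) w.
Proof.
rewrite shuffleE /=.
under eq_bigr => k _ do under eq_bigr => u _ do under eq_bigr => v _ do
  rewrite count_shw mulrnDr.
under eq_bigr => k _ do under eq_bigr => u _ do rewrite big_split /=.
under eq_bigr => k _ do rewrite big_split /=.
rewrite big_split /=; congr (_ + _).
- rewrite big_ord_recl /= big_seq1 big1 ?add0r; last by move=> v _; rewrite mulr0n.
  rewrite shuffleE; apply: eq_bigr => k _.
  rewrite /bump /= add1n subSS big_allpairs_dep /=.
  rewrite exchange_big /=; apply: eq_bigr => u _.
  rewrite exchange_big /=; apply: eq_bigr => v _.
  rewrite -(sum_pick (fun b => (s (b :: u) * t v) *+ count_mem w (shw u v)) a).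
  by apply: eq_bigr => b _; rewrite mulnC mulrnA.
- rewrite big_ord_recr /= [X in _ + X]big1 ?addr0; last by move=> u _; rewrite subnn /= big_seq1 mulr0n.
  rewrite shuffleE; apply: eq_bigr => k _.
  rewrite subSn; last by rewrite -ltnS.
  apply: eq_bigr => u _.
  rewrite /= big_allpairs_dep /= exchange_big /=; apply: eq_bigr => v _.
  rewrite -(sum_pick (fun b => (s u * t (b :: v)) *+ count_mem w (shw u v)) a).
  by apply: eq_bigr => b _; rewrite mulnC mulrnA.
Qed.


Definition ssum (I : Type) (r : seq I) (P : pred I) (F : I -> ser R A) : ser R A :=
  fun u => \sum_(i <- r | P i) F i u.
Definition sscale (x : R) s : ser R A := fun u => x * s u.
Definition sadd s t : ser R A := fun u => s u + t u.
Definition szero : ser R A := fun _ => 0.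

Lemma D_ssum I r P F a : D a (@ssum I r P F) = ssum r P (fun i => D a (F i)).
Proof. by []. Qed.
Lemma D_sscale x s a : D a (sscale x s) = sscale x (D a s).
Proof. by []. Qed.
Lemma D_sadd s t a : D a (sadd s t) = sadd (D a s) (D a t).
Proof. by []. Qed.
Lemma D_szero a : D a szero = szero.
Proof. by []. Qed.
Lemma D_one a : D a (one1) = szero.
Proof. by []. Qed.

Lemma sh_local s1 s2 t1 t2 w :
  (forall u, (size u <= size w)%N -> s1 u = s2 u) ->
  (forall u, (size u <= size w)%N -> t1 u = t2 u) ->
  shuffle s1 t1 w = shuffle s2 t2 w.
Proof.
elim: w s1 s2 t1 t2 => [|a w IH] s1 s2 t1 t2 Hs Ht.
  by rewrite !shuffle_nil Hs ?Ht.
rewrite !shuffle_cons; congr (_ + _); apply: IH => u Hu /=; rewrite /D.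
all: first [apply: Hs | apply: Ht]; rewrite /=; lia.
Qed.

Lemma sh_comm s t w : shuffle s t w = shuffle t s w.
Proof.
elim: w s t => [|a w IH] s t; first by rewrite !shuffle_nil mulrC.
by rewrite !shuffle_cons IH addrC IH.
Qed.

Lemma sh_suml I r P F t w :
  shuffle (@ssum I r P F) t w = \sum_(i <- r | P i) shuffle (F i) t w.
Proof.
elim: w F t => [|a w IH] F t.
  by rewrite shuffle_nil /ssum mulr_suml; apply: eq_bigr => i _; rewrite shuffle_nil.
rewrite shuffle_cons D_ssum !IH -big_split /=.
by apply: eq_bigr => i _; rewrite shuffle_cons.
Qed.

Lemma sh_sumr I r P F t w :
  shuffle t (@ssum I r P F) w = \sum_(i <- r | P i) shuffle t (F i) w.
Proof. by rewrite sh_comm sh_suml; apply: eq_bigr => i _; rewrite sh_comm. Qed.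

Lemma sh_scalel x s t w : shuffle (sscale x s) t w = x * shuffle s t w.
Proof.
elim: w s t => [|a w IH] s t; first by rewrite !shuffle_nil mulrA.
by rewrite !shuffle_cons D_sscale !IH mulrDr.
Qed.

Lemma sh_scaler x s t w : shuffle t (sscale x s) w = x * shuffle t s w.
Proof. by rewrite sh_comm sh_scalel sh_comm. Qed.

Lemma sh_addl s1 s2 t w : shuffle (sadd s1 s2) t w = shuffle s1 t w + shuffle s2 t w.
Proof.
elim: w s1 s2 t => [|a w IH] s1 s2 t; first by rewrite !shuffle_nil mulrDl.
rewrite !shuffle_cons D_sadd !IH; lra.
Qed.

Lemma sh_addr s1 s2 t w : shuffle t (sadd s1 s2) w = shuffle t s1 w + shuffle t s2 w.
Proof. by rewrite sh_comm sh_addl !(sh_comm t). Qed.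

Lemma sh_zerol t w : shuffle szero t w = 0.
Proof.
elim: w t => [|a w IH] t; first by rewrite shuffle_nil mul0r.
by rewrite shuffle_cons D_szero !IH addr0.
Qed.

Lemma sh_onel s w : shuffle one1 s w = s w.
Proof.
elim: w s => [|a w IH] s; first by rewrite shuffle_nil mul1r.
by rewrite shuffle_cons D_one sh_zerol IH add0r.
Qed.

Lemma sh_oner s w : shuffle s one1 w = s w.
Proof. by rewrite sh_comm sh_onel. Qed.

Lemma D_sh a s t : D a (shuffle s t) = sadd (shuffle (D a s) t) (shuffle s (D a t)).
Proof. by apply: functional_extensionality => w; rewrite /D shuffle_cons. Qed.

Lemma sh_assoc s t u w : shuffle (shuffle s t) u w = shuffle s (shuffle t u) w.
Proof.
elim: w s t u => [|a w IH] s t u; first by rewrite !shuffle_nil mulrA.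
rewrite !shuffle_cons !D_sh sh_addl sh_addr !IH; lra.
Qed.

Lemma sh_assocF s t u : shuffle (shuffle s t) u = shuffle s (shuffle t u).
Proof. by apply: functional_extensionality => w; apply: sh_assoc. Qed.
Lemma sh_commF s t : shuffle s t = shuffle t s.
Proof. by apply: functional_extensionality => w; apply: sh_comm. Qed.
Lemma sh_onelF s : shuffle one1 s = s.
Proof. by apply: functional_extensionality => w; apply: sh_onel. Qed.

Lemma sh_ACA s t u v : shuffle (shuffle s t) (shuffle u v) = shuffle (shuffle s u) (shuffle t v).
Proof.
by rewrite !sh_assocF -(sh_assocF t) (sh_commF t u) sh_assocF.
Qed.

Definition supp (k : nat) s := forall w, (size w < k)%N -> s w = 0.

Lemma sh_supp i j s t : supp i s -> supp j t -> supp (i + j) (shuffle s t).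
Proof.
move=> Hs Ht w; elim: w i j s t Hs Ht => [|a w IH] i j s t Hs Ht /= Hw.
  rewrite shuffle_nil; case: i Hs Hw => [|i] Hs Hw.
    by rewrite Ht ?mulr0.
  by rewrite Hs ?mul0r.
rewrite shuffle_cons (IH i.-1 j) ?add0r; first last.
- by case: i Hs Hw => [|i] Hs Hw /=; lia.
- by [].
- by move=> u Hu; apply: Hs => /=; lia.
rewrite (IH i j.-1) //.
- by move=> u Hu; apply: Ht => /=; lia.
- by case: j Ht Hw => [|j] Ht Hw /=; lia.
Qed.

End Sh.

Section Mono.
Variable R : realType.
Variable A : finType.
Variable q : nat.
Notation one1 := (@Defs.one R A).
Implicit Types (e : 'I_q -> ser R A) (al be : mono q).

Lemma shpowS (s : ser R A) k : shpow s k.+1 = shuffle s (shpow s k).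
Proof. by []. Qed.
Lemma shpow0 (s : ser R A) : shpow s 0 = one1.
Proof. by []. Qed.

Lemma shpow_add (s : ser R A) a b : shpow s (a + b) = shuffle (shpow s a) (shpow s b).
Proof.
elim: a => [|a IH]; first by rewrite add0n shpow0 sh_onelF.
by rewrite addSn !shpowS IH sh_assocF.
Qed.

Lemma shpow_supp (s : ser R A) k : supp 1 s -> supp k (shpow s k).
Proof.
move=> Hs; elim: k => [|k IH]; first by move=> w.
by rewrite shpowS -add1n; apply: sh_supp.
Qed.

Lemma shpow_local (s1 s2 : ser R A) k (w : seq A) :
  (forall u, (size u <= size w)%N -> s1 u = s2 u) ->
  forall u, (size u <= size w)%N -> shpow s1 k u = shpow s2 k u.
Proof.
move=> H; elim: k => [|k IH] u Hu //.
rewrite !shpowS; apply: sh_local => v Hv.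
  by apply: H; apply: leq_trans Hv Hu.
by apply: IH; apply: leq_trans Hv Hu.
Qed.

Definition fm e al (l : seq 'I_q) : ser R A :=
  foldr (fun i acc => shuffle (shpow (e i) (al i)) acc) one1 l.

Lemma shmono_fm e al : shmono e al = fm e al (enum 'I_q).
Proof. by []. Qed.

Definition madd al be : mono q := [ffun i => (al i + be i)%N].

Lemma shmono_add e al be : shmono e (madd al be) = shuffle (shmono e al) (shmono e be).
Proof.
rewrite !shmono_fm; elim: (enum 'I_q) => [|i l IH] /=; first by rewrite sh_onelF.
by rewrite IH ffunE shpow_add sh_ACA.
Qed.

Lemma shmono_zero e : shmono e [ffun => 0%N] = one1.
Proof.
rewrite shmono_fm; elim: (enum 'I_q) => [|i l IH] //=.
by rewrite IH ffunE shpow0 sh_onelF.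
Qed.

Lemma deg_enum al : deg al = (\sum_(i <- enum 'I_q) al i)%N.
Proof. by rewrite /deg big_enum. Qed.

Lemma shmono_supp e al : (forall i, supp 1 (e i)) -> supp (deg al) (shmono e al).
Proof.
move=> He; rewrite deg_enum shmono_fm; elim: (enum 'I_q) => [|i l IH] /=.
  by rewrite big_nil => w.
rewrite big_cons; apply: sh_supp => //; exact: shpow_supp.
Qed.

Lemma shmono_local e1 e2 al (w : seq A) :
  (forall i u, (size u <= size w)%N -> e1 i u = e2 i u) ->
  shmono e1 al w = shmono e2 al w.
Proof.
move=> H; rewrite !shmono_fm.
suff: forall u, (size u <= size w)%N -> fm e1 al (enum 'I_q) u = fm e2 al (enum 'I_q) u.
  by apply.
elim: (enum 'I_q) => [|i l IH] u Hu //=.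
apply: sh_local => v Hv; last by apply: IH; apply: leq_trans Hv Hu.
apply: (@shpow_local _ _ _ w) => //; last by apply: leq_trans Hv Hu.
by move=> x Hx; apply: H.
Qed.

End Mono.


Section MC.
Variable R : realType.
Variable m : nat.
Notation L := 'I_m.+1.
Notation one1 := (@Defs.one R L).
Implicit Types (c s t : ser R L) (g : 'I_m -> ser R L).

Definition mc c g : ser R L := fun w =>
  \sum_(k < (size w).+1) \sum_(eta <- allw L k) c eta * phibar g eta w.

Lemma mixcompE q (c : 'I_q -> ser R L) g j w : mixcomp c g j w = mc (c j) g w.
Proof.
rewrite /mixcomp /mc; apply: eq_bigr => k _.
by rewrite -(sum_tuple _ (fun eta => c j eta * phibar g eta w)).
Qed.

Lemma phibar_nil g : phibar g [::] = one1.
Proof. by []. Qed.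

Lemma phibar_cons g b eta : phibar g (b :: eta) =
  lcons b (match unlift ord0 b with
           | None => phibar g eta
           | Some i => shuffle (g i) (phibar g eta) end).
Proof. by rewrite /phibar /=; case: (unlift ord0 b). Qed.

Lemma phibar_supp g eta : supp (size eta) (phibar g eta).
Proof.
elim: eta => [|b eta IH] w; first by [].
rewrite phibar_cons /lcons.
case: w => [|a w] //= Hw.
case: (a == b) => //; case: (unlift ord0 b) => [i|]; last by apply: IH.
have H0 : supp 0 (g i) by move=> u.
exact: (sh_supp H0 IH Hw).
Qed.

Lemma phibar_local g1 g2 eta w :
  (forall i u, (size u < size w)%N -> g1 i u = g2 i u) ->
  phibar g1 eta w = phibar g2 eta w.
Proof.
elim: eta w => [|b eta IH] w H; first by [].
rewrite !phibar_cons /lcons.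
case: w H => [|a w] H //=.
case: (a == b) => //; case: (unlift ord0 b) => [i|]; last first.
  by apply: IH => i u Hu; apply: H; rewrite /= ltnS ltnW.
apply: sh_local => u Hu; first by apply: H; rewrite /= ltnS.
by apply: IH => j v Hv; apply: H; rewrite /= ltnS ltnW // (leq_trans Hv Hu).
Qed.

Lemma mc_trunc c g w N : (size w <= N)%N ->
  mc c g w = \sum_(k < N.+1) \sum_(eta <- allw L k) c eta * phibar g eta w.
Proof.
move=> HN; rewrite /mc.
rewrite (big_ord_widen N.+1 (fun k => \sum_(eta <- allw L k) c eta * phibar g eta w)) //.
rewrite big_mkcond; apply: eq_bigr => k _ /=.
case: ifP => // Hk; rewrite big_seq big1 // => eta Heta.
by rewrite phibar_supp ?mulr0 // (allw_size Heta) ltnNge -ltnS Hk.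
Qed.

Lemma mc_nil c g : mc c g [::] = c [::].
Proof. by rewrite /mc /= big_ord1 big_seq1 /= mulr1. Qed.

Lemma sum_pick' (F : L -> R) a : \sum_(b <- index_enum L) (if a == b then F b else 0) = F a.
Proof.
rewrite (bigD1_seq a) ?mem_index_enum ?index_enum_uniq //= eqxx big1 ?addr0 //.
by move=> b; rewrite eq_sym => /negbTE ->.
Qed.

Lemma mc_cons c g a w : mc c g (a :: w) =
  match unlift ord0 a with
  | None => mc (D a c) g w
  | Some i => shuffle (g i) (mc (D a c) g) w end.
Proof.
rewrite /mc /= big_ord_recl /= big_seq1 /= mulr0 add0r.
under eq_bigr => k _ do rewrite big_allpairs_dep /=.
have E : forall k : 'I_(size w).+1,
  \sum_(b <- index_enum L) \sum_(eta <- allw L k) c (b :: eta) * phibar g (b :: eta) (a :: w)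
  = \sum_(eta <- allw L k) c (a :: eta) * (match unlift ord0 a with
           | None => phibar g eta
           | Some i => shuffle (g i) (phibar g eta) end) w.
  move=> k; rewrite exchange_big /=; apply: eq_bigr => eta _.
  rewrite -(sum_pick' (fun b => c (b :: eta) * (match unlift ord0 b with
           | None => phibar g eta
           | Some i => shuffle (g i) (phibar g eta) end) w) a).
  apply: eq_bigr => b _.
  case: (unlift ord0 b) => [i|]; rewrite /lcons /=; case: (a == b); rewrite ?mulr0 //.
under eq_bigr => k _ do rewrite add0n E.
case: (unlift ord0 a) => [i|] //.
transitivity (shuffle (g i) (ssum (index_enum 'I_(size w).+1) (fun _ => true)
  (fun k => ssum (allw L k) (fun _ => true) (fun eta => sscale (c (a :: eta)) (phibar g eta)))) w).
  rewrite sh_sumr; apply: eq_bigr => k _.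
  rewrite sh_sumr; apply: eq_bigr => eta _.
  by rewrite sh_scaler.
apply: sh_local => // u Hu.
have := mc_trunc (D a c) g Hu; rewrite /mc => ->; by [].
Qed.

Lemma D_mc c g a : D a (mc c g) =
  match unlift ord0 a with
  | None => mc (D a c) g
  | Some i => shuffle (g i) (mc (D a c) g) end.
Proof.
apply: functional_extensionality => w; rewrite /D mc_cons.
by case: (unlift ord0 a).
Qed.

Lemma mc_clocal c1 c2 g w : (forall u, (size u <= size w)%N -> c1 u = c2 u) ->
  mc c1 g w = mc c2 g w.
Proof.
move=> H; apply: eq_bigr => k _; rewrite !big_seq; apply: eq_bigr => eta Heta.
rewrite H // (allw_size Heta); by case: k {Heta}.
Qed.

Lemma mc_glocal c g1 g2 w : (forall i u, (size u < size w)%N -> g1 i u = g2 i u) ->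
  mc c g1 w = mc c g2 w.
Proof.
move=> H; apply: eq_bigr => k _; apply: eq_bigr => eta _.
by rewrite (phibar_local _ H).
Qed.

Lemma mc_ssum I r P F g w :
  mc (@ssum R L I r P F) g w = \sum_(i <- r | P i) mc (F i) g w.
Proof.
rewrite /mc /ssum.
under eq_bigr => k _ do under eq_bigr => eta _ do rewrite mulr_suml.
under eq_bigr => k _ do rewrite exchange_big.
by rewrite exchange_big.
Qed.

Lemma mc_sscale x c g w : mc (sscale x c) g w = x * mc c g w.
Proof.
rewrite /mc mulr_sumr; apply: eq_bigr => k _; rewrite mulr_sumr.
by apply: eq_bigr => eta _; rewrite mulrA.
Qed.

Lemma mc_sadd s t g w : mc (sadd s t) g w = mc s g w + mc t g w.
Proof.
rewrite /mc -big_split; apply: eq_bigr => k _; rewrite -big_split.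
by apply: eq_bigr => eta _; rewrite mulrDl.
Qed.

Lemma mc_saddF s t g : mc (sadd s t) g = sadd (mc s g) (mc t g).
Proof. by apply: functional_extensionality => w; rewrite mc_sadd. Qed.

Lemma mc_sh s t g w : mc (shuffle s t) g w = shuffle (mc s g) (mc t g) w.
Proof.
move: {2}(size w) (leqnn (size w)) => n.
elim: n w s t => [|n IH] w s t Hw.
  case: w Hw => // _; by rewrite mc_nil !shuffle_nil !mc_nil.
case: w Hw => [|a w] Hw; first by rewrite mc_nil !shuffle_nil !mc_nil.
rewrite mc_cons shuffle_cons !D_mc.
case: (unlift ord0 a) => [i|].
  rewrite D_sh mc_saddF sh_addr.
  rewrite sh_assoc -(sh_assocF (mc s g)) (sh_commF (mc s g) (g i)) sh_assocF.
  congr (_ + _); apply: sh_local => // u Hu; apply: IH; exact: leq_trans Hu Hw.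
by rewrite D_sh mc_sadd !IH.
Qed.

Lemma mc_one g : mc one1 g = one1.
Proof.
apply: functional_extensionality => w.
rewrite /mc big_ord_recl /= big_seq1 mul1r big1 ?addr0 // => k _.
by rewrite big_allpairs_dep big1 // => b _; rewrite big1 // => eta _; rewrite mul0r.
Qed.

Lemma mc_shF s t g : mc (shuffle s t) g = shuffle (mc s g) (mc t g).
Proof. by apply: functional_extensionality => w; apply: mc_sh. Qed.

Lemma mc_shpow s g k : mc (shpow s k) g = shpow (mc s g) k.
Proof.
elim: k => [|k IH]; first by rewrite !shpow0 mc_one.
by rewrite !shpowS mc_shF IH.
Qed.

Lemma mc_shmono q (e : 'I_q -> ser R L) al g :
  mc (shmono e al) g = shmono (fun i => mc (e i) g) al.
Proof.
rewrite !shmono_fm; elim: (enum 'I_q) => [|i l IH] /=; first by apply: mc_one.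
by rewrite mc_shF IH mc_shpow.
Qed.

End MC.


Section Box.
Variable R : realType.
Variable q : nat.

Lemma natf_inj K : injective (@natf q K).
Proof.
move=> b1 b2 E; apply/ffunP => i; apply: val_inj.
by have := congr1 (fun f : mono q => f i) E; rewrite !ffunE.
Qed.

Lemma natf_le K (b : {ffun 'I_q -> 'I_K.+1}) i : (natf b i <= K)%N.
Proof. by rewrite ffunE -ltnS ltn_ord. Qed.

Lemma sum_ind_unique K (x : mono q) (F : mono q -> R) :
  \sum_(b : {ffun 'I_q -> 'I_K.+1}) (if natf b == x then F (natf b) else 0) =
  if [forall i, (x i <= K)%N] then F x else 0.
Proof.
case: forallP => H.
  pose b0 : {ffun 'I_q -> 'I_K.+1} := [ffun i => inord (x i)].
  have Hb0 : natf b0 = x by apply/ffunP => i; rewrite !ffunE inordK // ltnS H.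
  rewrite (bigD1 b0) //= Hb0 eqxx big1 ?addr0 // => b Hb.
  case: eqP => // E; rewrite -Hb0 in E; move/natf_inj in E.
  by rewrite E eqxx in Hb.
rewrite big1 // => b _; case: eqP => // E; exfalso; apply: H => i.
by rewrite -E natf_le.
Qed.

Lemma box_change K K' (G : mono q -> R) :
  (forall x, G x != 0 -> forall i, (x i <= K)%N && (x i <= K')%N) ->
  \sum_(b : {ffun 'I_q -> 'I_K.+1}) G (natf b) = \sum_(b : {ffun 'I_q -> 'I_K'.+1}) G (natf b).
Proof.
move=> HG.
transitivity (\sum_(b : {ffun 'I_q -> 'I_K.+1}) \sum_(b' : {ffun 'I_q -> 'I_K'.+1})
   (if natf b' == natf b then G (natf b') else 0)).
  apply: eq_bigr => b _; rewrite sum_ind_unique; case: forallP => // H.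
  case: (G (natf b) =P 0) => // /eqP nz; exfalso; apply: H => i.
  by case/andP: (HG _ nz i).
rewrite exchange_big; apply: eq_bigr => b' _.
transitivity (\sum_(b : {ffun 'I_q -> 'I_K.+1})
   (if natf b == natf b' then G (natf b) else 0)).
  by apply: eq_bigr => b _; rewrite eq_sym; case: eqP => [->|].
rewrite sum_ind_unique; case: forallP => // H.
case: (G (natf b') =P 0) => // /eqP nz; exfalso; apply: H => i.
by case/andP: (HG _ nz i).
Qed.

Lemma le_deg (x : mono q) i : (x i <= deg x)%N.
Proof. by rewrite /deg (bigD1 i) //= leq_addr. Qed.

Definition msub (x y : mono q) : mono q := [ffun i => (x i - y i)%N].

Lemma deg_sub (x y : mono q) : (forall i, y i <= x i)%N -> (deg (msub x y) + deg y)%N = deg x.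
Proof.
move=> H; rewrite /deg -big_split /=; apply: eq_bigr => i _.
by rewrite ffunE subnK.
Qed.

Lemma madd_eq (x y z : mono q) :
  (x == madd y z) = [forall i, (y i <= x i)%N] && (z == msub x y).
Proof.
apply/eqP/andP.
  move=> ->; split; first by apply/forallP => i; rewrite ffunE leq_addr.
  by apply/eqP/ffunP => i; rewrite !ffunE addKn.
case=> /forallP H /eqP ->; apply/ffunP => i; rewrite !ffunE subnKC //.
Qed.

End Box.

Section WF.
Variable R : realType.
Variable A : finType.
Variable q : nat.
Notation one1 := (@Defs.one R A).
Implicit Types (e : 'I_q -> ser R A) (dj : cser R q).

Definition wf dj e : ser R A := fun w =>
  \sum_(a : {ffun 'I_q -> 'I_(size w).+1}) dj (natf a) * shmono e (natf a) w.

Definition eproper e := forall i, supp 1 (e i).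

Lemma wf_trunc dj e w N : eproper e -> (size w <= N)%N ->
  wf dj e w = \sum_(a : {ffun 'I_q -> 'I_N.+1}) dj (natf a) * shmono e (natf a) w.
Proof.
move=> He HN; rewrite /wf.
apply: (@box_change R q (size w) N (fun x => dj x * shmono e x w)) => x nz i.
have Hd : (deg x <= size w)%N.
  rewrite leqNgt; apply/negP => Hlt.
  by move: nz; rewrite shmono_supp // mulr0 eqxx.
have := le_deg x i => Hi.
by rewrite (leq_trans Hi Hd) (leq_trans Hi (leq_trans Hd HN)).
Qed.

Lemma wf_local dj e1 e2 w :
  (forall i u, (size u <= size w)%N -> e1 i u = e2 i u) -> wf dj e1 w = wf dj e2 w.
Proof.
move=> H; apply: eq_bigr => a _; congr (_ * _); exact: shmono_local.
Qed.

Lemma wf_cone e : wf (@cone R q) e = one1.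
Proof.
apply: functional_extensionality => w; rewrite /wf.
pose a0 : {ffun 'I_q -> 'I_(size w).+1} := [ffun => ord0].
have Ha0 : natf a0 = [ffun => 0%N] by apply/ffunP => i; rewrite !ffunE.
rewrite (bigD1 a0) //= big1 ?addr0.
  by rewrite Ha0 /cone eqxx mul1r shmono_zero.
move=> a Ha; rewrite /cone; case: eqP => [E|]; last by rewrite mul0r.
by rewrite -Ha0 in E; move/natf_inj: E => E; rewrite E eqxx in Ha.
Qed.

End WF.


Section WF2.
Variable R : realType.
Variable A : finType.
Variable q : nat.
Notation one1 := (@Defs.one R A).
Implicit Types (e : 'I_q -> ser R A) (dj : cser R q).

Lemma wf_mul d1 d2 e w : eproper e ->
  shuffle (wf d1 e) (wf d2 e) w = wf (cmul d1 d2) e w.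
Proof.
move=> He.
have HS : forall x : mono q, shmono e x w =
    \sum_(c : {ffun 'I_q -> 'I_(size w).+1}) (if natf c == x then shmono e (natf c) w else 0).
  move=> x; rewrite (sum_ind_unique (size w) x (fun y => shmono e y w)); case: (boolP [forall i, (x i <= size w)%N]) => // /forallPn [i Hi].
  rewrite shmono_supp //; rewrite -ltnNge in Hi; exact: leq_trans Hi (le_deg x i).
transitivity (\sum_(a : {ffun 'I_q -> 'I_(size w).+1}) \sum_(b : {ffun 'I_q -> 'I_(size w).+1}) \sum_(c : {ffun 'I_q -> 'I_(size w).+1})
   (if natf c == madd (natf a) (natf b) then d1 (natf a) * d2 (natf b) * shmono e (natf c) w else 0)).
  transitivity (shuffle (ssum (index_enum {ffun 'I_q -> 'I_(size w).+1}) xpredT (fun a : {ffun 'I_q -> 'I_(size w).+1} => sscale (d1 (natf a)) (shmono e (natf a))))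
                      (ssum (index_enum {ffun 'I_q -> 'I_(size w).+1}) xpredT (fun a : {ffun 'I_q -> 'I_(size w).+1} => sscale (d2 (natf a)) (shmono e (natf a)))) w).
    by apply: sh_local => u Hu; rewrite (wf_trunc _ He Hu).
  rewrite sh_suml; apply: eq_bigr => a _.
  rewrite sh_scalel sh_sumr mulr_sumr; apply: eq_bigr => b _.
  rewrite sh_scaler -shmono_add HS !mulr_sumr; apply: eq_bigr => c _.
  by case: ifP; rewrite ?mulr0 // mulrA.
rewrite /wf.
transitivity (\sum_(c : {ffun 'I_q -> 'I_(size w).+1}) \sum_(a : {ffun 'I_q -> 'I_(size w).+1}) \sum_(b : {ffun 'I_q -> 'I_(size w).+1})
   (if natf c == madd (natf a) (natf b) then d1 (natf a) * d2 (natf b) * shmono e (natf c) w else 0)).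
  rewrite [RHS]exchange_big; apply: eq_bigr => a _; by rewrite [RHS]exchange_big.
apply: eq_bigr => c _.
pose x := natf c.
pose G (y : mono q) := if [forall i, (y i <= x i)%N] then d1 y * d2 (msub x y) else 0.
have E1 : cmul d1 d2 x = \sum_(a : {ffun 'I_q -> 'I_(size w).+1}) G (natf a).
  rewrite /cmul big_mkcond.
  transitivity (\sum_(b : {ffun 'I_q -> 'I_(deg x).+1}) G (natf b)).
    apply: eq_bigr => b _; rewrite /G.
    have -> : [forall i, (natf b i <= x i)%N] = [forall i, (b i <= x i)%N].
      by apply: eq_forallb => i; rewrite ffunE.
    case: ifP => // _; congr (_ * d2 _); apply/ffunP => i; rewrite !ffunE //.
  apply: (@box_change R q (deg x) (size w) G) => y nz i.
  move: nz; rewrite /G; case: forallP => [H _|_]; last by rewrite eqxx.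
  have Hx := H i.
  by rewrite (leq_trans Hx (le_deg x i)) (leq_trans Hx (natf_le c i)).
rewrite -/x E1 mulr_suml; apply: eq_bigr => a _.
rewrite /G; under eq_bigr => b _ do rewrite madd_eq.
case: ifP => H; last by rewrite mul0r big1 // => b _; rewrite H.
rewrite -mulrA.
transitivity (\sum_(b : {ffun 'I_q -> 'I_(size w).+1}) (if natf b == msub x (natf a) then
    d1 (natf a) * (d2 (natf b) * shmono e x w) else 0)).
  by apply: eq_bigr => b _ /=; case: ifP; rewrite // mulrA.
rewrite (sum_ind_unique (size w) (msub x (natf a)) (fun y => d1 (natf a) * (d2 y * shmono e x w))).
case: forallP => // H'; exfalso; apply: H' => i.
rewrite ffunE; apply: leq_trans (leq_subr _ _) (natf_le c i).
Qed.

End WF2.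


Section FP.
Variables (X V : Type) (sz : X -> nat) (Phi : (X -> V) -> (X -> V)).
Hypothesis loc : forall h1 h2 x, (forall y, (sz y < sz x)%N -> h1 y = h2 y) -> Phi h1 x = Phi h2 x.

Lemma fp_unique h1 h2 : Phi h1 = h1 -> Phi h2 = h2 -> h1 = h2.
Proof.
move=> E1 E2; apply: functional_extensionality => x.
suff: forall n x, (sz x < n)%N -> h1 x = h2 x by apply.
elim=> [|n IH] y Hy //.
rewrite -E1 -E2; apply: loc => z Hz; apply: IH.
exact: leq_trans Hz Hy.
Qed.

Lemma fp_exists (h0 : X -> V) : exists h, Phi h = h.
Proof.
pose hn n := iter n Phi h0.
have C : forall n x k, (sz x < n)%N -> (n <= k)%N -> hn k x = hn n x.
  elim=> [|n IH] x k // Hx Hk.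
  case: k Hk => [|k] // Hk /=.
  apply: loc => y Hy; apply: IH => //; exact: leq_trans Hy Hx.
exists (fun x => hn (sz x).+1 x); apply: functional_extensionality => x.
transitivity (Phi (hn (sz x).+1) x).
  by apply: loc => y Hy; symmetry; apply: C => //; rewrite ltnS ltnW.
rewrite (_ : Phi (hn (sz x).+1) x = hn (sz x).+2 x) //.
by apply: C.
Qed.
End FP.

Section Cinv.
Variable R : realType.
Variable q : nat.
Variable d : cser R q.
Hypothesis Hd : d [ffun => 0%N] != 0.

Definition PhiC (h : cser R q) : cser R q := fun a =>
  (@cone R q a - \sum_(b : {ffun 'I_q -> 'I_(deg a).+1} | [forall i, (b i <= a i)%N] && (b != [ffun => ord0]))
      d (natf b) * h [ffun i => (a i - b i)%N]) / d [ffun => 0%N].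

Lemma PhiC_loc h1 h2 a : (forall y, (deg y < deg a)%N -> h1 y = h2 y) -> PhiC h1 a = PhiC h2 a.
Proof.
move=> H; rewrite /PhiC; congr ((_ - _) / _); apply: eq_bigr => b /andP[Hb Hb0].
congr (_ * _); apply: H.
have -> : [ffun i => (a i - b i)%N] = msub a (natf b) by apply/ffunP => i; rewrite !ffunE.
have Hle : forall i, (natf b i <= a i)%N by move=> i; rewrite ffunE; exact: (forallP Hb i).
have E := deg_sub Hle.
have : (0 < deg (natf b))%N.
  case: (boolP [exists i, b i != ord0]).
    case/existsP => i Hi; apply: leq_trans (le_deg (natf b) i); rewrite ffunE lt0n.
    by move: Hi; apply: contra => /eqP Hi; apply/eqP; apply: val_inj.
  move/existsPn => H0; exfalso; move/negP: Hb0; apply; apply/eqP/ffunP => i.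
  by rewrite ffunE; apply/eqP; move: (H0 i); rewrite negbK.
move: (deg (msub a (natf b))) (deg (natf b)) E => X Y E0 Hp; lia.
Qed.

Lemma cinv_exists : exists h, cmul d h = @cone R q.
Proof.
have [h Eh] := fp_exists PhiC_loc (fun _ => 0).
exists h; apply: functional_extensionality => a.
rewrite /cmul (bigD1 [ffun => ord0]) /=; last by apply/forallP => i; rewrite ffunE.
have -> : natf ([ffun => ord0] : {ffun 'I_q -> 'I_(deg a).+1}) = [ffun => 0%N].
  by apply/ffunP => i; rewrite !ffunE.
have -> : [ffun i => (a i - ([ffun => ord0] : {ffun 'I_q -> 'I_(deg a).+1}) i)%N] = a.
  by apply/ffunP => i; rewrite !ffunE subn0.
rewrite -{1}Eh /PhiC mulrC divfK // subrK //.
Qed.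
End Cinv.

Section MCWF.
Variable R : realType.
Variable m q : nat.
Notation L := 'I_m.+1.

Lemma mc_wf (dj : cser R q) (e : 'I_q -> ser R L) g w : eproper e ->
  mc (wf dj e) g w = wf dj (fun i => mc (e i) g) w.
Proof.
move=> He.
transitivity (mc (ssum (index_enum {ffun 'I_q -> 'I_(size w).+1}) xpredT
   (fun a => sscale (dj (natf a)) (shmono e (natf a)))) g w).
  by apply: mc_clocal => u Hu; rewrite (wf_trunc _ He Hu).
rewrite mc_ssum /wf; apply: eq_bigr => a _.
by rewrite mc_sscale mc_shmono.
Qed.
End MCWF.


Unset Implicit Arguments.
Theorem theorem17 (R : realType) (m q : nat)
  (c : 'I_q -> ser R 'I_m.+1) (d : 'I_m -> cser R q) :
  proper_ser c -> cpurely_improper d ->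
  let f := mixcomp c (compinv (wfcomp (cinv d) c)) in
  proper_ser f /\
  f = mixcomp c (wfcomp d f) /\
  (forall e : 'I_q -> ser R 'I_m.+1,
      proper_ser e -> e = mixcomp c (wfcomp d e) -> e = f).
Proof.
move=> Hc Hd f.
have Hcp : eproper c by move=> i [|a w] // _; exact: Hc i.
pose g := wfcomp (cinv d) c.
have Hcinv : forall j, cmul (d j) (cinv d j) = @cone R q.
  move=> j; exact: (epsilon_spec _ (fun h => cmul (d j) h = @cone R q) (cinv_exists (Hd j))).
have Hone : forall j, shuffle (wfcomp d c j) (g j) = @Defs.one R 'I_m.+1.
  move=> j; apply: functional_extensionality => w.
  change (shuffle (wf (d j) c) (wf (cinv d j) c) w = @Defs.one R 'I_m.+1 w).
  by rewrite wf_mul // Hcinv wf_cone.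
have HS : shinv g = wfcomp d c.
  apply: functional_extensionality => j.
  have spec : shuffle (g j) (shinv g j) = @Defs.one R 'I_m.+1.
    have ex : exists hh, shuffle (g j) hh = @Defs.one R 'I_m.+1.
      by exists (wfcomp d c j); rewrite sh_commF Hone.
    exact: (epsilon_spec _ (fun hh => shuffle (g j) hh = @Defs.one R 'I_m.+1) ex).
  rewrite -(sh_onelF (shinv g j)) -(Hone j) sh_assocF spec.
  by rewrite sh_commF sh_onelF.
pose h := compinv g.
have Hh : h = mixcomp (shinv g) h.
  rewrite /h /compinv.
  suff ex : exists hh, hh = mixcomp (shinv g) hh.
    exact: (epsilon_spec _ (fun hh => hh = mixcomp (shinv g) hh) ex).
  pose Phi := fun (H : 'I_m * seq 'I_m.+1 -> R) (p : 'I_m * seq 'I_m.+1) =>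
     mixcomp (shinv g) (fun j w => H (j, w)) p.1 p.2.
  have loc : forall h1 h2 x, (forall y, (size y.2 < size x.2)%N -> h1 y = h2 y) ->
      Phi h1 x = Phi h2 x.
    move=> h1 h2 [j w] H /=; rewrite /Phi /= !mixcompE; apply: mc_glocal => i u Hu.
    exact: (H (i, u)).
  have [H EH] := fp_exists loc (fun _ => 0).
  exists (fun j w => H (j, w)).
  apply: functional_extensionality => j; apply: functional_extensionality => w.
  by have := congr1 (fun F => F (j, w)) EH.
have Ef : f = fun i => mc (c i) h.
  by apply: functional_extensionality => i; apply: functional_extensionality => u;
    rewrite /f mixcompE.
have key : wfcomp d f = h.
  apply: functional_extensionality => j; apply: functional_extensionality => w.
  change (wf (d j) f w = h j w).
  rewrite Ef -mc_wf // [in RHS]Hh mixcompE HS //.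
have Ffix : f = mixcomp c (wfcomp d f) by rewrite key.
split.
  by move=> j; rewrite /f mixcompE mc_nil; exact: Hc.
split; first exact: Ffix.
move=> e He Ee.
pose Phi := fun (H : 'I_q * seq 'I_m.+1 -> R) (p : 'I_q * seq 'I_m.+1) =>
   mixcomp c (wfcomp d (fun i w => H (i, w))) p.1 p.2.
have loc : forall h1 h2 x, (forall y, (size y.2 < size x.2)%N -> h1 y = h2 y) ->
    Phi h1 x = Phi h2 x.
  move=> h1 h2 [j w] H /=; rewrite /Phi /= !mixcompE; apply: mc_glocal => i u Hu.
  change (wf (d i) (fun i w => h1 (i, w)) u = wf (d i) (fun i w => h2 (i, w)) u).
  apply: wf_local => i' v Hv; apply: (H (i', v)) => /=.
  exact: leq_ltn_trans Hv Hu.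
have U : (fun p : 'I_q * seq 'I_m.+1 => e p.1 p.2) = (fun p => f p.1 p.2).
  apply: (fp_unique loc).
    by apply: functional_extensionality => -[i w]; rewrite /Phi /= [in RHS]Ee.
  by apply: functional_extensionality => -[i w]; rewrite /Phi /= [in RHS]Ffix.
apply: functional_extensionality => i; apply: functional_extensionality => w.
by have := congr1 (fun F => F (i, w)) U.
Qed.
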